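(* There exist an $\mathrm{FO}$-convergent sequence of finite graphs $(G_n)_{n\in\mathbb{N}}$ and a first-order formula $\xi(x)$ in the language of graphs with one free variable, satisfying $G_n\models(\exists x)\xi(x)$ for all $n$, such that there is no sequence $(r_n)$ with $r_n\in\xi(G_n)$ for which the sequence of rooted graphs $(G_n,r_n)$ is $\mathrm{FO}$-convergent.
   Context: Graphs are first-order structures in the language with one binary (edge) relation. For a formula $\phi$ with $p$ free variables and a structure $G$, $\phi(G)=\{\mathbf{v}\in V(G)^p : G\models\phi(\mathbf{v})\}$. The Stone pairing of $\phi$ ($p\ge1$) with a finite graph $G$ is $\langle\phi,G\rangle=|\phi(G)|/|V(G)|^p$; for sentences it is $1$ if $G\models\phi$ and $0$ otherwise. A sequence of finite graphs $(G_n)$ is $\mathrm{FO}$-convergent if $(\langle\phi,G_n\rangle)$ converges for every first-order formula $\phi$. The language of rooted graphs adds a constant symbol $\mathrm{Root}$; $(G,r)$ is $G$ with $\mathrm{Root}$ interpreted as the vertex $r$. A sequence of rooted finite graphs $(G_n,r_n)$ is $\mathrm{FO}$-convergent if $(\langle\phi,(G_n,r_n)\rangle)$ converges for every first-order formula $\phi$ in the language of rooted graphs (Stone pairings defined in the same way). *)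

(* Defs.v *)
From Stdlib Require Import Reals.
From mathcomp Require Import all_boot.

Set Implicit Arguments.
Unset Strict Implicit.
Unset Printing Implicit Defensive.

Record fsgraph := FGraph {
  gsize : nat;
  gadj : rel 'I_gsize;
  gadj_sym : symmetric gadj;
  gadj_irr : irreflexive gadj }.

Definition vert (G : fsgraph) := 'I_(gsize G).

(* First-order syntax for the language of rooted graphs (one binary relation
   and a constant symbol Root), with de Bruijn variables.  The connectives
   =, Adj, not, and, exists are complete for first-order logic. *)
Inductive term := TVar of nat | TRoot.

Inductive formula :=
| FEq of term & term
| FAdj of term & term
| FNot of formula
| FAnd of formula & formula
| FEx of formula.

Definition term_no_root (t : term) : bool :=
  if t is TRoot then false else true.

Fixpoint no_root (phi : formula) : bool :=
  match phi with
  | FEq t1 t2 | FAdj t1 t2 => term_no_root t1 && term_no_root t2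
  | FNot f => no_root f
  | FAnd f g => no_root f && no_root g
  | FEx f => no_root f
  end.

Definition tbound (t : term) : nat := if t is TVar k then k.+1 else 0.

Fixpoint fbound (phi : formula) : nat :=
  match phi with
  | FEq t1 t2 | FAdj t1 t2 => maxn (tbound t1) (tbound t2)
  | FNot f => fbound f
  | FAnd f g => maxn (fbound f) (fbound g)
  | FEx f => (fbound f).-1
  end.

Definition ext {T} (x : T) (e : nat -> T) : nat -> T :=
  fun k => match k with 0 => x | k'.+1 => e k' end.

(* Satisfaction.  [root] is the interpretation of Root (None for unrooted
   graphs), [e] the variable assignment (None = unassigned). *)
Definition eval_term (G : fsgraph) (root : option (vert G))
  (e : nat -> option (vert G)) (t : term) : option (vert G) :=
  match t with TVar k => e k | TRoot => root end.

Fixpoint sat (G : fsgraph) (root : option (vert G))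
  (e : nat -> option (vert G)) (phi : formula) : bool :=
  match phi with
  | FEq t1 t2 =>
      match eval_term root e t1, eval_term root e t2 with
      | Some a, Some b => a == b | _, _ => false end
  | FAdj t1 t2 =>
      match eval_term root e t1, eval_term root e t2 with
      | Some a, Some b => gadj a b | _, _ => false end
  | FNot f => ~~ sat root e f
  | FAnd f g => sat root e f && sat root e g
  | FEx f => [exists v : vert G, sat root (ext (Some v) e) f]
  end.

Definition tuple_env (G : fsgraph) (p : nat) (v : {ffun 'I_p -> vert G})
  : nat -> option (vert G) :=
  fun k => omap v (insub k : option 'I_p).

Definition solutions (G : fsgraph) (root : option (vert G)) (phi : formula)
  : {set {ffun 'I_(fbound phi) -> vert G}} :=
  [set v | sat root (tuple_env v) phi].

(* Stone pairing <phi, G> = |phi(G)| / |V(G)|^p ; for sentences (p = 0)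
   this is 1 if G |= phi and 0 otherwise. *)
Definition stone (G : fsgraph) (root : option (vert G)) (phi : formula) : R :=
  Rdiv (INR #|solutions root phi|) (INR (expn (gsize G) (fbound phi))).

Definition FO_convergent (G : nat -> fsgraph) : Prop :=
  forall phi : formula, no_root phi ->
    exists l : R, Un_cv (fun n => @stone (G n) None phi) l.

Definition FO_convergent_rooted (G : nat -> fsgraph)
  (r : forall n, vert (G n)) : Prop :=
  forall phi : formula,
    exists l : R, Un_cv (fun n => @stone (G n) (Some (r n)) phi) l.

Definition sat1 (G : fsgraph) (xi : formula) (v : vert G) : bool :=
  @sat G None (ext (Some v) (fun _ => None)) xi.

Definition models (G : fsgraph) (phi : formula) : bool :=
  @sat G None (fun _ => None) phi.

(* Main.v *)
Require Import Defs.
From Stdlib Require Import Reals Lra Lia Classical.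
From mathcomp Require Import all_boot zify.

Set Implicit Arguments.
Unset Strict Implicit.
Unset Printing Implicit Defensive.


Fixpoint qd (f : formula) : nat :=
  match f with
  | FEq _ _ | FAdj _ _ => 0
  | FNot f => qd f
  | FAnd f g => maxn (qd f) (qd g)
  | FEx f => (qd f).+1
  end.

Lemma sat_ext (G : fsgraph) root (e e' : nat -> option (vert G)) f :
  (forall k, e k = e' k) -> sat root e f = sat root e' f.
Proof.
elim: f e e' => [t1 t2|t1 t2|f IH|f IHf g IHg|f IH] e e' H /=.
- by case: t1 => [i|]; case: t2 => [j|] /=; rewrite ?H.
- by case: t1 => [i|]; case: t2 => [j|] /=; rewrite ?H.
- by rewrite (IH e e').
- by rewrite (IHf e e') // (IHg e e').
- apply: eq_existsb => v; apply: IH => -[|k] //=.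
Qed.

Definition senv (G : fsgraph) (s : seq (vert G)) (k : nat) : option (vert G) :=
  nth None (map Some s) k.

Lemma senv_cons (G : fsgraph) (v : vert G) s k :
  senv (v :: s) k = ext (Some v) (senv s) k.
Proof. by case: k. Qed.

Lemma senv_None (G : fsgraph) (s : seq (vert G)) k :
  (senv s k == None) = (size s <= k).
Proof.
elim: s k => [|x s IH] [|k] //=.
exact: IH.
Qed.

Lemma ef (G G' : fsgraph) (P : nat -> seq (vert G) -> seq (vert G') -> Prop)
  (Hsize : forall q s s', P q s s' -> size s = size s')
  (Hat : forall q s s' i j a b a' b', P q s s' ->
     senv s i = Some a -> senv s j = Some b ->
     senv s' i = Some a' -> senv s' j = Some b' ->
     (a == b) = (a' == b') /\ gadj a b = gadj a' b')
  (Hforth : forall q s s', P q.+1 s s' -> forall v, exists v', P q (v :: s) (v' :: s'))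
  (Hback : forall q s s', P q.+1 s s' -> forall v', exists v, P q (v :: s) (v' :: s'))
  f q s s' : qd f <= q -> P q s s' ->
  sat None (senv s) f = sat None (senv s') f.
Proof.
have Hn : forall q s s' k, P q s s' -> (senv s k == None) = (senv s' k == None).
  by move=> q0 s0 s0' k HP; rewrite !senv_None (Hsize _ _ _ HP).
have Hev : forall q s s' t, P q s s' ->
   (eval_term None (senv s) t == None) = (eval_term None (senv s') t == None).
  by move=> q0 s0 s0' [k|] HP //=; apply: Hn HP.
have Hsome : forall (H : fsgraph) (s : seq (vert H)) t a,
   eval_term None (senv s) t = Some a -> exists i, t = TVar i /\ senv s i = Some a.
  by move=> H s0 [k|] a //= E; exists k.
elim: f q s s' => [t1 t2|t1 t2|f IH|f IHf g IHg|f IH] q s s' Hq HP /=.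
- case Ea: (eval_term None (senv s) t1) => [a|];
  case Eb: (eval_term None (senv s) t2) => [b|];
  case Ea': (eval_term None (senv s') t1) => [a'|];
  case Eb': (eval_term None (senv s') t2) => [b'|] //;
  try (by have := Hev _ _ _ t1 HP; rewrite Ea Ea');
  try (by have := Hev _ _ _ t2 HP; rewrite Eb Eb').
  have [i [Ht1 Ei]] := Hsome _ _ _ _ Ea; have [j [Ht2 Ej]] := Hsome _ _ _ _ Eb.
  subst t1 t2.
  by have [-> _] := Hat _ _ _ _ _ _ _ _ _ HP Ei Ej Ea' Eb'.
- case Ea: (eval_term None (senv s) t1) => [a|];
  case Eb: (eval_term None (senv s) t2) => [b|];
  case Ea': (eval_term None (senv s') t1) => [a'|];
  case Eb': (eval_term None (senv s') t2) => [b'|] //;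
  try (by have := Hev _ _ _ t1 HP; rewrite Ea Ea');
  try (by have := Hev _ _ _ t2 HP; rewrite Eb Eb').
  have [i [Ht1 Ei]] := Hsome _ _ _ _ Ea; have [j [Ht2 Ej]] := Hsome _ _ _ _ Eb.
  subst t1 t2.
  by have [_ ->] := Hat _ _ _ _ _ _ _ _ _ HP Ei Ej Ea' Eb'.
- by rewrite (IH q s s').
- rewrite /= geq_max in Hq; case/andP: Hq => Hf Hg.
  by rewrite (IHf q s s') // (IHg q s s').
- case: q Hq HP => [|q] //= Hq HP.
  apply/existsP/existsP => -[v Hv].
  + have [v' HP'] := Hforth _ _ _ HP v; exists v'.
    rewrite -(sat_ext _ _ (senv_cons v' s')).
    rewrite -(IH q (v :: s)) //.
    by rewrite (sat_ext _ _ (senv_cons v s)).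
  + have [w HP'] := Hback _ _ _ HP v; exists w.
    rewrite -(sat_ext _ _ (senv_cons w s)).
    rewrite (IH q (w :: s) (v :: s')) //.
    by rewrite (sat_ext _ _ (senv_cons v s')).
Qed.


Notation Vt m0 K := ('I_m0.+1 + {ffun 'I_m0.+1 -> 'I_K})%type.

Definition adjV {m0 K : nat} (k : nat) (u w : Vt m0 K) : bool :=
  match u, w with
  | inl a, inl a' => a != a'
  | inl a, inr b => b a < k
  | inr b, inl a => b a < k
  | inr _, inr _ => false
  end.

Lemma adjV_sym m0 K k : symmetric (@adjV m0 K k).
Proof. by move=> [a|b] [a'|b'] //=; rewrite eq_sym. Qed.
Lemma adjV_irr m0 K k : irreflexive (@adjV m0 K k).
Proof. by move=> [a|b] /=; rewrite ?eqxx. Qed.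

Definition mkG (m0 K k : nat) : fsgraph :=
  @FGraph #|{: Vt m0 K}| (fun i j => adjV k (enum_val i) (enum_val j))
    (fun i j => adjV_sym k _ _) (fun i => adjV_irr k _).

Definition isA {m0 K : nat} (u : Vt m0 K) : bool := if u is inl _ then true else false.
Definition atom {m0 K : nat} k (u w : Vt m0 K) := (u == w, isA u, adjV k u w).
Definition bit {m0 K : nat} k (a : 'I_m0.+1) (u : Vt m0 K) : bool :=
  match u with inl _ => false | inr b => b a < k end.
Definition pat {m0 K : nat} k (a : 'I_m0.+1) (x : seq (Vt m0 K)) := map (bit k a) x.
Definition cnt {m0 K : nat} k (x : seq (Vt m0 K)) (T : seq bool) :=
  #|[set a : 'I_m0.+1 | (inl a \notin x) && (pat k a x == T)]|.

Definition Inv {m0 K m0' K' : nat} k k' q (x : seq (Vt m0 K)) (x' : seq (Vt m0' K')) : Prop :=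
 [/\ size x = size x',
     (forall i j, i < size x -> j < size x ->
        atom k (nth (inl ord0) x i) (nth (inl ord0) x j) =
        atom k' (nth (inl ord0) x' i) (nth (inl ord0) x' j)),
     (forall T, minn (cnt k x T) (2^q) = minn (cnt k' x' T) (2^q)),
     (size x + q < k) && (size x + q < K - k) &
     (size x + q < k') && (size x + q < K' - k')].

Lemma Inv_sym m0 K m0' K' k k' q (x : seq (Vt m0 K)) (x' : seq (Vt m0' K')) :
  Inv k k' q x x' -> Inv k' k q x' x.
Proof.
case=> Hs Ha Hc H1 H2; split => //.
- by move=> i j; rewrite -Hs => Hi Hj; rewrite Ha.
- by rewrite -Hs.
- by rewrite -Hs.
Qed.

Definition spl (c c' c1 h : nat) : nat :=
  if c == c' then c1 else if c1 < h then c1 else if c - c1 < h then c' - (c - c1) else h.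

Lemma splP c c' c1 h : minn c (h + h) = minn c' (h + h) -> c1 <= c ->
  [/\ spl c c' c1 h <= c', minn c1 h = minn (spl c c' c1 h) h &
      minn (c - c1) h = minn (c' - spl c c' c1 h) h].
Proof.
rewrite /spl => Hm Hc1.
case: eqP => [<-|Hne]; first by split.
case: ltnP => H1; first by split; lia.
case: ltnP => H2; by split; lia.
Qed.

Lemma min_down a b q : minn a (2 ^ q.+1) = minn b (2 ^ q.+1) -> minn a (2 ^ q) = minn b (2 ^ q).
Proof. rewrite expnS mul2n -addnn; lia. Qed.

Lemma card_split (T : finType) (Q P : pred T) :
  #|[set a | Q a && P a]| + #|[set a | Q a && ~~ P a]| = #|[set a | Q a]|.
Proof.
rewrite -(cardID P [set a | Q a]); congr (_ + _); apply: eq_card => a; rewrite !inE /=.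
  by [].
by rewrite andbC.
Qed.

Lemma pat_nth m0 K k a (x : seq (Vt m0 K)) j : j < size x ->
  nth false (pat k a x) j = bit k a (nth (inl ord0) x j).
Proof. by move=> Hj; rewrite /pat (nth_map (inl ord0)). Qed.

Lemma cnt_old m0 K k (x : seq (Vt m0 K)) j T : j < size x ->
  cnt k (nth (inl ord0) x j :: x) T =
  (if T is c :: T' then (if nth false T' j == c then cnt k x T' else 0) else 0).
Proof.
move=> Hj; set u := nth _ x j; have ux : u \in x by apply: mem_nth.
case: T => [|c T'].
  apply/eqP; rewrite cards_eq0; apply/eqP/setP => a; by rewrite !inE andbF.
have E : [set a | (inl a \notin u :: x) && (pat k a (u :: x) == c :: T')] =
         [set a | (inl a \notin x) && (pat k a x == T') && (nth false T' j == c)].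
  apply/setP => a; rewrite !inE /= eqseq_cons.
  case Ha: (inl a \in x); first by rewrite orbT.
  have -> : (inl a == u) = false by apply/eqP => E; move: Ha; rewrite E ux.
  rewrite /=; case Hp: (pat k a x == T'); rewrite ?andbF ?andbT //=.
  by move/eqP: Hp => <-; rewrite pat_nth // eq_sym.
rewrite /cnt E; case: ifP => _.
  by apply: eq_card => a; rewrite !inE andbT.
by apply/eqP; rewrite cards_eq0; apply/eqP/setP => a; rewrite !inE andbF.
Qed.

Lemma cnt_freshA m0 K k (x : seq (Vt m0 K)) a T : inl a \notin x ->
  cnt k (inl a :: x) T = (if T is false :: T' then cnt k x T' - (pat k a x == T') else 0).
Proof.
move=> Ha.
case: T => [|[] T'].
- apply/eqP; rewrite cards_eq0; apply/eqP/setP => a2; by rewrite !inE andbF.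
- apply/eqP; rewrite cards_eq0; apply/eqP/setP => a2; by rewrite !inE /= eqseq_cons andbF.
have E : [set a2 | (inl a2 \notin inl a :: x) && (pat k a2 (inl a :: x) == false :: T')] =
         [set a2 | (inl a2 \notin x) && (pat k a2 x == T')] :\ a.
  apply/setP => a2; rewrite !inE /= eqseq_cons /=.
  by rewrite negb_or -andbA.
rewrite /cnt E.
rewrite [in X in _ = X - _](cardsD1 a) !inE Ha /=.
case: (pat k a x == T'); lia.
Qed.

Lemma cnt_freshB m0 K k (x : seq (Vt m0 K)) b T :
  cnt k (inr b :: x) T = (if T is c :: T' then
     #|[set a | (inl a \notin x) && (pat k a x == T') && ((b a < k) == c)]| else 0).
Proof.
case: T => [|c T'].
  apply/eqP; rewrite cards_eq0; apply/eqP/setP => a2; by rewrite !inE andbF.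
apply: eq_card => a; rewrite !inE /= eqseq_cons.
by case: (inl a \in x); case: (_ == c); case: (_ == T').
Qed.


Lemma eq_lr (A B : eqType) (a : A) (b : B) : (inl a == inr b :> (A + B)%type) = false.
Proof. by []. Qed.
Lemma eq_rl (A B : eqType) (a : A) (b : B) : (inr b == inl a :> (A + B)%type) = false.
Proof. by []. Qed.
Lemma eq_ll (A B : eqType) (a a2 : A) : (inl a == inl a2 :> (A + B)%type) = (a == a2).
Proof. by []. Qed.
Lemma eq_rr (A B : eqType) (b b2 : B) : (inr b == inr b2 :> (A + B)%type) = (b == b2).
Proof. by []. Qed.

Lemma card_lo K k : k <= K -> #|[set v : 'I_K | v < k]| = k.
Proof.
move=> H.
have inj : injective (widen_ord H) by move=> u w /(congr1 val) /= /val_inj.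
rewrite -[RHS](card_ord k) -(card_imset _ inj); apply: eq_card => v.
rewrite !inE; apply/idP/imsetP => [Hv|[w _ ->]] /=; last exact: ltn_ord.
by exists (Ordinal Hv) => //; apply: val_inj.
Qed.

Lemma card_hi K k : k <= K -> #|[set v : 'I_K | ~~ (v < k)]| = K - k.
Proof.
move=> H; have := cardsC [set v : 'I_K | v < k]; rewrite card_lo // card_ord.
have -> : ~: [set v : 'I_K | v < k] = [set v : 'I_K | ~~ (v < k)].
  by apply/setP => v; rewrite !inE.
lia.
Qed.

Lemma pick_out (T : finType) (R : {set T}) (l : seq T) :
  size l < #|R| -> exists2 v, v \in R & v \notin l.
Proof.
move=> H; case: (boolP [exists v in R, v \notin l]) => [/exists_inP [v H1 H2]|/exists_inPn Hn].
  by apply: (ex_intro2 _ _ v).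
have : #|R| <= #|[set v in l]|.
  apply: subset_leq_card. apply/subsetP => v Hv; rewrite inE; have := Hn v Hv; by rewrite negbK.
rewrite cardsE => H'; move: (leq_trans H' (card_size l)); lia.
Qed.

Lemma take_set (T : finType) (S : {set T}) (Y : pred T) j :
  (forall a, a \in S -> Y a = (a \in take j (enum S))) -> j <= #|S| ->
  #|[set a | (a \in S) && Y a]| = j.
Proof.
move=> HY Hj.
have -> : [set a | (a \in S) && Y a] = [set a in take j (enum S)].
  apply/setP => a; rewrite !inE; case Ha: (a \in S); first by rewrite HY.
  by apply/esym/negP => /mem_take; rewrite mem_enum Ha.
rewrite cardsE; have /card_uniqP -> : uniq (take j (enum S)) by apply: take_uniq; apply: enum_uniq.
by rewrite size_takel // -cardE.
Qed.

Lemma isA_agree m0 K m0' K' k k' (x : seq (Vt m0 K)) (x' : seq (Vt m0' K')) i :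
  (atom k (nth (inl ord0) x i) (nth (inl ord0) x i) =
   atom k' (nth (inl ord0) x' i) (nth (inl ord0) x' i)) ->
  isA (nth (inl ord0) x i) = isA (nth (inl ord0) x' i).
Proof. by move/(congr1 (fun t => t.1.2)). Qed.

Lemma atom_freshA m0 K k (x : seq (Vt m0 K)) a i : inl a \notin x -> i < size x ->
  atom k (inl a) (nth (inl ord0) x i) =
    (false, true, if isA (nth (inl ord0) x i) then true else nth false (pat k a x) i) /\
  atom k (nth (inl ord0) x i) (inl a) =
    (false, isA (nth (inl ord0) x i), if isA (nth (inl ord0) x i) then true else nth false (pat k a x) i).
Proof.
move=> Ha Hi; rewrite pat_nth //; have := mem_nth (inl ord0) Hi.
case: (nth _ x i) => [a2|b2] Hin; rewrite /atom /=.
- have Ne : (a == a2) = false by apply/eqP => E; move: Ha; rewrite E Hin.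
  by rewrite !eq_ll Ne eq_sym Ne.
- by rewrite eq_lr eq_rl.
Qed.

Lemma atom_freshB m0 K k (x : seq (Vt m0 K)) b i : inr b \notin x -> i < size x ->
  atom k (inr b) (nth (inl ord0) x i) =
    (false, false, if nth (inl ord0) x i is inl a then b a < k else false) /\
  atom k (nth (inl ord0) x i) (inr b) =
    (false, isA (nth (inl ord0) x i), if nth (inl ord0) x i is inl a then b a < k else false).
Proof.
move=> Hb Hi; have := mem_nth (inl ord0) Hi.
case: (nth _ x i) => [a2|b2] Hin; rewrite /atom /= ?eq_lr ?eq_rl //.
have Ne : (b == b2) = false by apply/eqP => E; move: Hb; rewrite E Hin.
by rewrite !eq_rr Ne eq_sym Ne.
Qed.


Lemma forth m0 K m0' K' k k' q (x : seq (Vt m0 K)) (x' : seq (Vt m0' K')) :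
  Inv k k' q.+1 x x' -> forall u, exists u', Inv k k' q (u :: x) (u' :: x').
Proof.
case=> Hs Ha Hc Hp Hp' u.
have Hp2 : (size (u :: x) + q < k) && (size (u :: x) + q < K - k) by rewrite /= addSnnS.
have Hp2' : (size (u :: x) + q < k') && (size (u :: x) + q < K' - k').
  by rewrite /= addSnnS.
have H2q : 0 < 2 ^ q by rewrite expn_gt0.
have Eq2 : 2 ^ q.+1 = 2 ^ q + 2 ^ q by rewrite expnS mul2n addnn.
case Hux: (u \in x).
  have [j Hj Eu] : exists2 j, j < size x & nth (inl ord0) x j = u.
    by exists (index u x); [rewrite index_mem | apply: nth_index].
  subst u; exists (nth (inl ord0) x' j); split => //.
  - by rewrite /= Hs.
  - move=> [|i] [|l] /= Hi Hl; apply: Ha => //.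
  - move=> T; rewrite !cnt_old -?Hs //; case: T => [|c T'] //.
    by case: ifP => _ //; apply: min_down; apply: Hc.
case: u Hux Hp2 Hp2' => [a|b] /negbT Hux Hp2 Hp2'.
  set T0 := pat k a x.
  have Hc1 : 0 < cnt k x T0 by apply/card_gt0P; exists a; rewrite inE Hux eqxx.
  have Hc1' : 0 < cnt k' x' T0 by have := Hc T0; lia.
  have [a' Ha'] := card_gt0P Hc1'; rewrite inE in Ha'; case/andP: Ha' => Hax' /eqP Hpat'.
  exists (inl a'); split => //.
  - by rewrite /= Hs.
  - move=> [|i] [|l] /= Hi Hl.
    + by rewrite /atom /= !eqxx.
    + have Hl' : l < size x' by rewrite -Hs.
      have [-> _] := atom_freshA k Hux Hl.
      have [-> _] := atom_freshA k' Hax' Hl'.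
      by rewrite Hpat' (isA_agree (Ha _ _ Hl Hl)).
    + have Hi' : i < size x' by rewrite -Hs.
      have [_ ->] := atom_freshA k Hux Hi.
      have [_ ->] := atom_freshA k' Hax' Hi'.
      by rewrite Hpat' (isA_agree (Ha _ _ Hi Hi)).
    + by apply: Ha.
  - move=> T; rewrite !cnt_freshA //; case: T => [|[] T'] //.
    rewrite Hpat'; have := Hc T'; case E: (T0 == T').
      by move/eqP: E => <-; lia.
    by rewrite !subn0; apply: min_down.
set h := 2 ^ q.
have Hk0 : 0 < k' by move: Hp'; lia.
have HkK : k' < K' by move: Hp'; lia.
set c := fun T => cnt k x T.
set c' := fun T => cnt k' x' T.
set c1 := fun T => #|[set a | (inl a \notin x) && (pat k a x == T) && (b a < k)]|.
set cell' := fun T => [set a' : 'I_m0'.+1 | (inl a' \notin x') && (pat k' a' x' == T)].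
pose Y' := fun a' : 'I_m0'.+1 => if inl a' \in x' then
    (match nth (inl ord0) x (index (inl a') x') with inl a => b a < k | inr _ => false end)
    else a' \in take (spl (c (pat k' a' x')) (c' (pat k' a' x')) (c1 (pat k' a' x')) h)
                      (enum (cell' (pat k' a' x'))).
pose vals := pmap (fun w : Vt m0' K' => if w is inr b2 then Some (b2 ord0) else None) x'.
have Hvals : size vals <= size x by rewrite size_pmap Hs count_size.
have [v0 Hv0R Hv0n] : exists2 v0, v0 \in [set v : 'I_K' | (v < k') == Y' ord0] & v0 \notin vals.
  apply: pick_out.
  case EY: (Y' ord0).
  - have -> : [set v : 'I_K' | (v < k') == true] = [set v : 'I_K' | v < k'].
      by apply/setP => v; rewrite !inE eqb_id.
    rewrite card_lo; [apply: (leq_ltn_trans Hvals) | ]; by move: Hp'; lia.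
  - have -> : [set v : 'I_K' | (v < k') == false] = [set v : 'I_K' | ~~ (v < k')].
      by apply/setP => v; rewrite !inE eqbF_neg.
    rewrite card_hi; [apply: (leq_ltn_trans Hvals) | ]; by move: Hp'; lia.
pose lo0 := Ordinal (ltn_trans Hk0 HkK).
pose hi0 := Ordinal HkK.
pose b' := [ffun a' => if a' == ord0 then v0 else if Y' a' then lo0 else hi0].
have Hb' : forall a', (b' a' < k') = Y' a'.
  move=> a'; rewrite ffunE; case: eqP => [->|_]; first by move: Hv0R; rewrite inE => /eqP.
  by case: (Y' a') => //=; rewrite ltnn.
have Hfresh : inr b' \notin x'.
  apply/negP => Hin; move/negP: Hv0n; apply; rewrite mem_pmap; apply/mapP.
  by exists (inr b') => //=; rewrite ffunE eqxx.
have KA : forall l, l < size x ->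
   (if nth (inl ord0) x l is inl a then b a < k else false) =
   (if nth (inl ord0) x' l is inl a' then b' a' < k' else false).
  move=> l Hl; have Hl' : l < size x' by rewrite -Hs.
  have HA := isA_agree (Ha l l Hl Hl).
  case Ex: (nth _ x l) HA => [al|bl]; case Ex': (nth _ x' l) => [al'|bl'] //= _.
  rewrite Hb' /Y'.
  have Hin : inl al' \in x' by rewrite -Ex' mem_nth.
  rewrite Hin.
  have Hi0 : index (inl al') x' < size x by rewrite Hs index_mem.
  have := Ha _ _ Hi0 Hl; move/(congr1 (fun t => t.1.1)) => /=.
  by rewrite nth_index // Ex' eqxx => /eqP ->; rewrite Ex.
exists (inr b'); split => //.
- by rewrite /= Hs.
- move=> [|i] [|l] /= Hi Hl.
  + by rewrite /atom /= !eqxx.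
  + have Hl' : l < size x' by rewrite -Hs.
    have [-> _] := atom_freshB k Hux Hl.
    have [-> _] := atom_freshB k' Hfresh Hl'.
    by rewrite KA.
  + have Hi' : i < size x' by rewrite -Hs.
    have [_ ->] := atom_freshB k Hux Hi.
    have [_ ->] := atom_freshB k' Hfresh Hi'.
    by rewrite KA // (isA_agree (Ha _ _ Hi Hi)).
  + by apply: Ha.
- move=> T; rewrite !cnt_freshB; case: T => [|cb T'] //.
  have E' : #|[set a | (inl a \notin x') && (pat k' a x' == T') && ((b' a < k') == cb)]| =
            #|[set a | (a \in cell' T') && (Y' a == cb)]|.
    by apply: eq_card => a; rewrite !inE Hb'.
  rewrite E'; clear E'.
  have HY : forall a, a \in cell' T' ->
      Y' a = (a \in take (spl (c T') (c' T') (c1 T') h) (enum (cell' T'))).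
    by move=> a; rewrite inE => /andP [Hn /eqP Hpt]; rewrite /Y' (negbTE Hn) Hpt.
  have Hc1le : c1 T' <= c T'.
    by apply: subset_leq_card; apply/subsetP => a; rewrite !inE => /andP [].
  have HcT := Hc T'; rewrite Eq2 in HcT.
  have [S1 S2 S3] := splP HcT Hc1le.
  have Hsplit := take_set HY S1.
  case: cb.
  + have -> : #|[set a | (inl a \notin x) && (pat k a x == T') && ((b a < k) == true)]| = c1 T'.
      by apply: eq_card => a; rewrite !inE eqb_id.
    have -> : #|[set a | (a \in cell' T') && (Y' a == true)]| = spl (c T') (c' T') (c1 T') h.
      by rewrite -Hsplit; apply: eq_card => a; rewrite !inE eqb_id.
    exact: S2.
  + have -> : #|[set a | (inl a \notin x) && (pat k a x == T') && ((b a < k) == false)]| = c T' - c1 T'.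
      have := card_split (fun a => (inl a \notin x) && (pat k a x == T')) (fun a => b a < k).
      rewrite -/(c1 T').
      have -> : #|[set a | (inl a \notin x) && (pat k a x == T') && ~~ (b a < k)]| =
                #|[set a | (inl a \notin x) && (pat k a x == T') && ((b a < k) == false)]|.
        by apply: eq_card => a; rewrite !inE eqbF_neg.
      rewrite -/(cnt k x T') -/(c T'); lia.
    have -> : #|[set a | (a \in cell' T') && (Y' a == false)]| = c' T' - spl (c T') (c' T') (c1 T') h.
      have := card_split (fun a => a \in cell' T') Y'.
      have -> : #|[set a | (a \in cell' T') && ~~ Y' a]| = #|[set a | (a \in cell' T') && (Y' a == false)]|.
        by apply: eq_card => a; rewrite !inE eqbF_neg.
      have -> : #|[set a | a \in cell' T']| = c' T' by apply: eq_card => a; rewrite !inE.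
      rewrite Hsplit; lia.
    exact: S3.
Qed.

Lemma back m0 K m0' K' k k' q (x : seq (Vt m0 K)) (x' : seq (Vt m0' K')) :
  Inv k k' q.+1 x x' -> forall u', exists u, Inv k k' q (u :: x) (u' :: x').
Proof.
move=> /Inv_sym H u'; have [u Hu] := forth H u'; exists u; exact: Inv_sym.
Qed.


Definition ev {m0 K k : nat} (v : vert (mkG m0 K k)) : Vt m0 K := @enum_val (Vt m0 K) predT v.
Definition er {m0 K k : nat} (u : Vt m0 K) : vert (mkG m0 K k) := @enum_rank (Vt m0 K) u.

Lemma evK m0 K k : cancel (@ev m0 K k) er.
Proof. exact: enum_valK. Qed.
Lemma erK m0 K k : cancel (@er m0 K k) ev.
Proof. exact: enum_rankK. Qed.
Lemma ev_inj m0 K k : injective (@ev m0 K k).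
Proof. exact: can_inj (@evK m0 K k). Qed.

Lemma gadj_ev m0 K k (a b : vert (mkG m0 K k)) : gadj a b = adjV k (ev a) (ev b).
Proof. by []. Qed.

Lemma senv_nth m0 K k (s : seq (vert (mkG m0 K k))) i a :
  senv s i = Some a -> i < size s /\ nth (inl ord0) (map ev s) i = ev a.
Proof.
elim: s i => [|y s IH] [|i] //=.
- by rewrite /senv /= => -[->].
- move=> /IH [H1 H2]; split => //.
Qed.

Lemma Inv_sat m0 K k m0' K' k' q (s : seq (vert (mkG m0 K k))) (s' : seq (vert (mkG m0' K' k'))) f :
  qd f <= q -> Inv k k' q (map ev s) (map ev s') ->
  sat None (senv s) f = sat None (senv s') f.
Proof.
apply: (ef (P := fun q s s' => Inv k k' q (map ev s) (map ev s'))).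
- by move=> q0 s0 s0' [Hs _ _ _ _]; rewrite -(size_map ev s0) Hs size_map.
- move=> q0 s0 s0' i j a b a' b' [Hs Ha _ _ _] Ei Ej Ei' Ej'.
  have [Hi Ni] := senv_nth Ei; have [Hj Nj] := senv_nth Ej.
  have [_ Ni'] := senv_nth Ei'; have [_ Nj'] := senv_nth Ej'.
  have := Ha i j; rewrite size_map => /(_ Hi Hj).
  rewrite Ni Nj Ni' Nj' /atom => -[E1 _ E3].
  by rewrite !gadj_ev E3 -!(inj_eq (@ev_inj _ _ _)) E1.
- move=> q0 s0 s0' HP v; have [u' Hu'] := forth HP (ev v).
  by exists (er u'); rewrite /= erK.
- move=> q0 s0 s0' HP v'; have [u Hu] := back HP (ev v').
  by exists (er u); rewrite /= erK.
Qed.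


Definition sv {G : fsgraph} {p : nat} (v : {ffun 'I_p -> vert G}) : seq (vert G) :=
  [seq v i | i <- enum 'I_p].

Lemma size_sv (G : fsgraph) p (v : {ffun 'I_p -> vert G}) : size (sv v) = p.
Proof. by rewrite /sv size_map size_enum_ord. Qed.

Lemma tuple_env_senv (G : fsgraph) p (v : {ffun 'I_p -> vert G}) k :
  tuple_env v k = senv (sv v) k.
Proof.
rewrite /tuple_env /senv; case: (ltnP k p) => Hk.
- rewrite insubT /=.
  rewrite (nth_map (v (Ordinal Hk))); last by rewrite size_sv.
  rewrite /sv (nth_map (Ordinal Hk)) ?size_enum_ord //.
  by congr (Some (v _)); apply: val_inj => /=; rewrite nth_enum_ord.
- rewrite insubF; last by apply/negbTE; rewrite -leqNgt.
  by rewrite nth_default // size_map size_sv.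
Qed.

Definition generic {m0 K : nat} k p c (x : seq (Vt m0 K)) : bool :=
  [&& size x == p, all (fun u => ~~ isA u) x & [forall T : p.-tuple bool, c <= cnt k x T]].

Lemma gen_distinct m0 K k p c (x : seq (Vt m0 K)) i j : 0 < c -> generic k p c x ->
  i < size x -> j < size x -> nth (inl ord0) x i = nth (inl ord0) x j -> i = j.
Proof.
move=> Hc /and3P [/eqP Hs _ /forallP HT] Hi Hj Eij.
have Hsz : size (mkseq (fun l => l == i) p) == p by rewrite size_mkseq.
have := HT (Tuple Hsz) => /= H.
have [a] : exists a, a \in [set a | (inl a \notin x) && (pat k a x == mkseq (fun l => l == i) p)].
  by apply/card_gt0P; apply: leq_trans H.
rewrite inE => /andP [_ /eqP Hp].
have := congr1 (fun t => nth false t i) Hp; have := congr1 (fun t => nth false t j) Hp.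
rewrite /= !pat_nth // !nth_mkseq -?Hs // Eij eqxx.
by move=> -> /eqP.
Qed.

Lemma gen_atom m0 K k p c (x : seq (Vt m0 K)) i j : 0 < c -> generic k p c x ->
  i < size x -> j < size x -> atom k (nth (inl ord0) x i) (nth (inl ord0) x j) = (i == j, false, false).
Proof.
move=> Hc Hg Hi Hj; have := Hg; case/and3P => _ /(all_nthP (inl ord0)) HB _.
have := HB i Hi; have := HB j Hj.
have Heq : (nth (inl ord0) x i == nth (inl ord0) x j) = (i == j).
  apply/eqP/eqP => [|->] //; exact: gen_distinct Hc Hg Hi Hj.
rewrite /atom Heq; case: (nth _ x i) => [ai|bi]; case: (nth _ x j) => [aj|bj] //.
Qed.

Lemma gen_Inv m0 K m0' K' k k' p q (x : seq (Vt m0 K)) (x' : seq (Vt m0' K')) :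
  generic k p (2 ^ q) x -> generic k' p (2 ^ q) x' ->
  (p + q < k) && (p + q < K - k) -> (p + q < k') && (p + q < K' - k') ->
  Inv k k' q x x'.
Proof.
move=> Hg Hg' H1 H2.
have Hc : 0 < 2 ^ q by rewrite expn_gt0.
have := Hg; case/and3P => /eqP Hs _ /forallP HT.
have := Hg'; case/and3P => /eqP Hs' _ /forallP HT'.
split.
- by rewrite Hs Hs'.
- move=> i j Hi Hj; rewrite (gen_atom Hc Hg) // (gen_atom Hc Hg') //; by rewrite Hs' -Hs.
- move=> T; case: (eqVneq (size T) p) => HsT.
  + have HsT' : size T == p by rewrite HsT.
    have := HT (Tuple HsT'); have := HT' (Tuple HsT') => /= A B.
    have -> : minn (cnt k x T) (2 ^ q) = 2 ^ q by apply/minn_idPr.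
    by apply/esym/minn_idPr.
  + have E0 : forall (m1 K1 k1 : nat) (y : seq (Vt m1 K1)), size y = p -> cnt k1 y T = 0.
      move=> m1 K1 k1 y Hy; apply/eqP; rewrite cards_eq0; apply/eqP/setP => a; rewrite !inE.
      case: (pat k1 a y =P T) => [E|]; last by rewrite andbF.
      by move: HsT; rewrite -E size_map Hy eqxx.
    by rewrite !E0.
- by rewrite Hs; exact: H1.
- by rewrite Hs; exact: H2.
Qed.

Lemma claimA m0 K k m0' K' k' p
  (v : {ffun 'I_p -> vert (mkG m0 K k)}) (v' : {ffun 'I_p -> vert (mkG m0' K' k')}) f :
  (p + qd f < k) && (p + qd f < K - k) -> (p + qd f < k') && (p + qd f < K' - k') ->
  generic k p (2 ^ qd f) (map ev (sv v)) -> generic k' p (2 ^ qd f) (map ev (sv v')) ->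
  sat None (tuple_env v) f = sat None (tuple_env v') f.
Proof.
move=> H1 H2 Hg Hg'.
rewrite (sat_ext _ _ (tuple_env_senv v)) (sat_ext _ _ (tuple_env_senv v')).
apply: (Inv_sat (q := qd f)) => //.
exact: (gen_Inv (p := p)) Hg Hg' H1 H2.
Qed.


Lemma card_union (I W : finType) (F : I -> {set W}) : #|\bigcup_(i : I) F i| <= \sum_(i : I) #|F i|.
Proof.
elim/big_rec2: _ => [|i A n _ H]; first by rewrite cards0.
apply: leq_trans (leq_card_setU _ _).1 _; by rewrite leq_add2l.
Qed.

Lemma prodF (aT : finType) (f : aT -> nat) : foldr muln 1 [seq f x | x : aT] = \prod_(x : aT) f x.
Proof. by rewrite foldrE big_map big_enum. Qed.

Lemma expn_mono a b e : a <= b -> a ^ e <= b ^ e.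
Proof. by move=> H; elim: e => // e IH; rewrite !expnS leq_mul. Qed.

Lemma pigeon m (S : {set 'I_m}) c L :
  (forall g : 'I_c, exists2 a, a \in S & a %/ L = g) -> c <= #|S|.
Proof.
move=> H.
have Hsub : {subset iota 0 c <= [seq val a %/ L | a <- enum S]}.
  move=> g; rewrite mem_iota => /andP [_ Hg]; have [a Ha Ea] := H (Ordinal Hg).
  by apply/mapP; exists a; [rewrite mem_enum | rewrite Ea].
have := uniq_leq_size (iota_uniq 0 c) Hsub.
by rewrite size_iota size_map -cardE.
Qed.

Lemma card_grp m c L (g : 'I_c) : L = m %/ c -> L <= #|[set a : 'I_m | a %/ L == g]|.
Proof.
move=> HL.
case: (posnP L) => [->//|HL0].
have Hlt : forall j : 'I_L, g * L + j < m.
  move=> j; have H1 : g * L + j < g.+1 * L by rewrite mulSn addnC ltn_add2r ltn_ord.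
  apply: (leq_trans H1); apply: leq_trans (leq_divM m c); rewrite -HL.
  by rewrite [X in X <= _]mulnC leq_mul2l ltn_ord orbT.
pose f := fun j : 'I_L => Ordinal (Hlt j).
have inj : injective f by move=> j1 j2 /(congr1 val) /= /addnI /val_inj.
rewrite -[X in X <= _](card_ord L) -(card_imset predT inj).
apply: subset_leq_card; apply/subsetP => a /imsetP [j _ ->]; rewrite inE /=.
by rewrite divnMDl // divn_small // addn0.
Qed.

Definition embT {m0 K k p : nat} (w : {ffun 'I_p -> {ffun 'I_m0.+1 -> 'I_K}}) :
  {ffun 'I_p -> vert (mkG m0 K k)} := [ffun i => er (inr (w i))].

Lemma embT_inj m0 K k p : injective (@embT m0 K k p).
Proof.
move=> w1 w2 E; apply/ffunP => i; have := congr1 (fun v : {ffun 'I_p -> vert (mkG m0 K k)} => ev (v i)) E.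
by rewrite /embT !ffunE !erK => -[].
Qed.

Lemma xv_embT m0 K k p (w : {ffun 'I_p -> {ffun 'I_m0.+1 -> 'I_K}}) :
  map ev (sv (@embT m0 K k p w)) = [seq inr (w i) | i <- enum 'I_p].
Proof. by rewrite /sv -map_comp; apply: eq_map => i /=; rewrite ffunE erK. Qed.

Definition genw {m0 K : nat} k p c L (w : {ffun 'I_p -> {ffun 'I_m0.+1 -> 'I_K}}) : bool :=
  [forall T : {ffun 'I_p -> bool}, forall g : 'I_c,
     exists a : 'I_m0.+1, (a %/ L == g) && [forall i, (w i a < k) == T i]].

Lemma genw_generic m0 K k p c L (w : {ffun 'I_p -> {ffun 'I_m0.+1 -> 'I_K}}) :
  genw k c L w -> generic k p c (map ev (sv (@embT m0 K k p w))).
Proof.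
rewrite xv_embT => /forallP H.
apply/and3P; split.
- by rewrite size_map size_enum_ord.
- by apply/allP => u /mapP [i _ ->].
apply/forallP => T.
have /forallP HT := H [ffun i => tnth T i].
apply: (pigeon (L := L)) => g; have /existsP [a /andP [/eqP Ea /forallP Hi]] := HT g.
exists a; last exact: Ea.
rewrite inE; apply/andP; split.
  by apply/negP => /mapP [i _].
apply/eqP; rewrite /pat -map_comp -[RHS]map_tnth_enum; apply: eq_map => i /=.
by have /eqP := Hi i; rewrite ffunE.
Qed.

Definition bad {m0 K : nat} k p L (T : {ffun 'I_p -> bool}) (g : nat) :
  {set {ffun 'I_p -> {ffun 'I_m0.+1 -> 'I_K}}} :=
  [set w : {ffun 'I_p -> {ffun 'I_m0.+1 -> 'I_K}} | [forall a : 'I_m0.+1, (a %/ L == g) ==> ~~ [forall i, (w i a < k) == T i]]].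

Lemma card_match K k p t (T : {ffun 'I_p -> bool}) : k <= K -> t <= k -> t <= K - k ->
  t ^ p <= #|[set col : {ffun 'I_p -> 'I_K} | [forall i, (col i < k) == T i]]|.
Proof.
move=> HkK Htk HtK.
pose F := fun i : 'I_p => [pred v : 'I_K | (v < k) == T i].
have -> : #|[set col : {ffun 'I_p -> 'I_K} | [forall i, (col i < k) == T i]]| =
          #|[set col : {ffun 'I_p -> 'I_K} | col \in family F]|.
  by apply: eq_card => col; rewrite !inE.
rewrite cardsE card_family prodF.
rewrite -{1}(card_ord p) -prod_nat_const; apply: leq_prod => i _.
case E: (T i).
- have -> : #|F i| = #|[set v : 'I_K | v < k]| by apply: eq_card => v; rewrite !inE E eqb_id.
  by rewrite card_lo.
- have -> : #|F i| = #|[set v : 'I_K | ~~ (v < k)]| by apply: eq_card => v; rewrite !inE E eqbF_neg.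
  by rewrite card_hi.
Qed.

Lemma prod_if (I : finType) (P : pred I) x y :
  \prod_(i : I) (if P i then x else y) = x ^ #|[set i | P i]| * y ^ (#|I| - #|[set i | P i]|).
Proof.
rewrite (bigID P) /=.
rewrite (eq_bigr (fun _ => x)); last by move=> i ->.
rewrite [X in _ * X](eq_bigr (fun _ => y)); last by move=> i /negbTE ->.
rewrite !prod_nat_const.
congr (_ ^ _ * _ ^ _); first by apply: eq_card => i; rewrite inE.
rewrite -(cardC [set i | P i]); rewrite addKn. by apply: eq_card => i; rewrite !inE.
Qed.

Lemma card_bad m0 K k p L t (T : {ffun 'I_p -> bool}) (g : nat) :
  k <= K -> t <= k -> t <= K - k ->
  #|@bad m0 K k p L T g| <=
  (K ^ p - t ^ p) ^ #|[set a : 'I_m0.+1 | a %/ L == g]| *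
  (K ^ p) ^ (m0.+1 - #|[set a : 'I_m0.+1 | a %/ L == g]|).
Proof.
move=> HkK Htk HtK.
pose tr := fun u : {ffun 'I_m0.+1 -> {ffun 'I_p -> 'I_K}} =>
  [ffun i => [ffun a => u a i]] : {ffun 'I_p -> {ffun 'I_m0.+1 -> 'I_K}}.
have inj : injective tr.
  move=> u1 u2 E; apply/ffunP => a; apply/ffunP => i.
  have := congr1 (fun w : {ffun 'I_p -> {ffun 'I_m0.+1 -> 'I_K}} => w i a) E.
  by rewrite /tr !ffunE.
pose Good := [pred col : {ffun 'I_p -> 'I_K} | ~~ [forall i, (col i < k) == T i]].
pose F := fun a : 'I_m0.+1 => if a %/ L == g then Good else predT.
have Hsub : @bad m0 K k p L T g \subset tr @: [set u | u \in family F].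
  apply/subsetP => w; rewrite inE => /forallP Hw; apply/imsetP.
  exists [ffun a => [ffun i => w i a]].
    rewrite inE; apply/familyP => a; rewrite /F; case: ifP => Hg //.
    have := Hw a; rewrite Hg /= => H; rewrite inE.
    move: H; apply: contra => /forallP H; apply/forallP => i; have := H i; by rewrite !ffunE.
  by apply/ffunP => i; apply/ffunP => a; rewrite /tr !ffunE.
apply: leq_trans (subset_leq_card Hsub) _.
rewrite card_imset // cardsE card_family prodF.
have HS : #|[set: {ffun 'I_p -> 'I_K}]| = K ^ p by rewrite cardsT card_ffun !card_ord.
have HG : #|Good| <= K ^ p - t ^ p.
  have := card_match T HkK Htk HtK.
  have := cardC Good; rewrite card_ffun !card_ord => <-.
  have -> : #|[predC Good]| = #|[set col : {ffun 'I_p -> 'I_K} | [forall i, (col i < k) == T i]]|.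
    by apply: eq_card => col; rewrite !inE negbK.
  by move=> H; rewrite -addnBA // leq_addr.
apply: leq_trans (_ : \prod_(a : 'I_m0.+1) (if a %/ L == g then K ^ p - t ^ p else K ^ p) <= _).
  apply: leq_prod => a _; rewrite /F; case: ifP => _ //.
  by rewrite card_ffun !card_ord.
by rewrite prod_if card_ord.
Qed.

Lemma card_gen_lower m0 K k p c L :
  (K ^ m0.+1) ^ p <=
  #|[set v : {ffun 'I_p -> vert (mkG m0 K k)} | generic k p c (map ev (sv v))]| +
  \sum_(T : {ffun 'I_p -> bool}) \sum_(g : 'I_c) #|@bad m0 K k p L T g|.
Proof.
have Htot : #|[set w : {ffun 'I_p -> {ffun 'I_m0.+1 -> 'I_K}} | genw k c L w]| +
            #|~: [set w : {ffun 'I_p -> {ffun 'I_m0.+1 -> 'I_K}} | genw k c L w]| = (K ^ m0.+1) ^ p.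
  by rewrite cardsC !card_ffun !card_ord.
rewrite -Htot; apply: leq_add.
  rewrite -(card_imset _ (@embT_inj m0 K k p)); apply: subset_leq_card.
  apply/subsetP => v /imsetP [w]; rewrite inE => Hw ->; rewrite inE.
  exact: (@genw_generic m0 K k p c L w Hw).
apply: leq_trans (_ : #|\bigcup_(T : {ffun 'I_p -> bool}) \bigcup_(g : 'I_c) @bad m0 K k p L T g| <= _).
  apply: subset_leq_card; apply/subsetP => w; rewrite !inE.
  rewrite negb_forall => /existsP [T]; rewrite negb_forall => /existsP [g].
  rewrite negb_exists => /forallP H.
  apply/bigcupP; exists T => //; apply/bigcupP; exists g => //.
  rewrite inE; apply/forallP => a; apply/implyP => Ha; have := H a; by rewrite Ha.
apply: leq_trans (card_union _) _; apply: leq_sum => T _; exact: card_union.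
Qed.


Local Open Scope R_scope.

Lemma INR_add a b : INR (a + b) = INR a + INR b.
Proof. by rewrite -plusE plus_INR. Qed.
Lemma INR_mul a b : INR (a * b) = INR a * INR b.
Proof. by rewrite -multE mult_INR. Qed.
Lemma INR_exp a b : INR (a ^ b) = INR a ^ b.
Proof. elim: b => [|b IH]; first by rewrite expn0. by rewrite expnS INR_mul IH. Qed.
Lemma INR_sub a b : (b <= a)%N -> INR (a - b) = INR a - INR b.
Proof. move=> H; rewrite -minusE minus_INR //; exact/leP. Qed.
Lemma INR_leq a b : (a <= b)%N -> INR a <= INR b.
Proof. by move/leP; apply: le_INR. Qed.

Lemma bern x p : 0 <= x <= 1 -> 1 - INR p * x <= (1 - x) ^ p.
Proof.
move=> Hx; elim: p => [|p IH]; first by rewrite /=; lra.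
rewrite S_INR; change ((1 - x) ^ p.+1) with ((1 - x) * (1 - x) ^ p).
have H0 : 0 <= 1 - x by lra.
have : (1 - x) * (1 - INR p * x) <= (1 - x) * (1 - x) ^ p by apply: Rmult_le_compat_l.
have := pos_INR p; nra.
Qed.

Lemma sum_bound_seq (I : Type) (r : seq I) (f : I -> nat) M :
  (forall i, INR (f i) <= M) -> INR (\sum_(i <- r) f i) <= INR (size r) * M.
Proof.
move=> H; elim: r => [|i r IH]; first by rewrite big_nil /=; lra.
rewrite big_cons INR_add; change (size (i :: r)) with (size r).+1; rewrite S_INR; have := H i; lra.
Qed.

Lemma sum_bound (I : finType) (f : I -> nat) M :
  (forall i, INR (f i) <= M) -> INR (\sum_(i : I) f i) <= INR #|I| * M.
Proof.
move=> H; have := sum_bound_seq (index_enum I) H.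
by rewrite cardT enumT /index_enum.
Qed.

Lemma pow_dec r a b : 0 <= r <= 1 -> (a <= b)%N -> r ^ b <= r ^ a.
Proof.
move=> Hr Hab; rewrite -(subnKC Hab) -plusE pow_add.
have H1 : 0 <= r ^ a by apply: pow_le; lra.
have H2 : r ^ (b - a) <= 1.
  elim: (b - a)%N => [|e IH]; first by rewrite /=; lra.
  change (r ^ e.+1) with (r * r ^ e); have := pow_le r e (proj1 Hr); nra.
nra.
Qed.

Lemma le_div a b c : 0 < c -> a * c <= b -> a <= b / c.
Proof.
move=> Hc H; apply: (Rmult_le_reg_r c) => //.
rewrite /Rdiv Rmult_assoc Rinv_l; lra.
Qed.

Lemma div_le a b c : 0 < c -> b <= a * c -> b / c <= a.
Proof.
move=> Hc H; apply: (Rmult_le_reg_r c) => //.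
rewrite /Rdiv Rmult_assoc Rinv_l; lra.
Qed.

Definition tt n := (n.+1 * n.+1)%N.
Definition KK n := (3 * tt n)%N.
Definition kk n := if odd n then tt n else (2 * tt n)%N.
Definition Gs n := mkG n (KK n) (kk n).

Lemma params n : [/\ (tt n <= kk n)%N, (tt n <= KK n - kk n)%N & (kk n <= KK n)%N].
Proof. rewrite /kk /KK; case: odd; split; lia. Qed.

Lemma gsize_Gs n : gsize (Gs n) = (n.+1 + KK n ^ n.+1)%N.
Proof. by rewrite /= card_sum card_ord card_ffun !card_ord. Qed.

Definition genset p c n :=
  [set v : {ffun 'I_p -> vert (Gs n)} | generic (kk n) p c (map ev (sv v))].

Lemma three_pow p : 1 <= 3 ^ p.
Proof. elim: p => [|p IH]; first by rewrite /=; lra. change (3 ^ p.+1) with (3 * 3 ^ p); lra. Qed.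

Lemma rho_bounds p : 0 <= 1 - / 3 ^ p <= 1.
Proof.
have H := three_pow p.
have H1 : 0 < / 3 ^ p by apply: Rinv_0_lt_compat; lra.
have H2 : / 3 ^ p <= 1 by rewrite -Rinv_1; apply: Rinv_le_contravar; lra.
lra.
Qed.

Lemma gf_lower n p q :
  1 - INR p / (3 * INR n.+1) - INR (2 ^ p) * INR (2 ^ q) * (1 - / 3 ^ p) ^ (n.+1 %/ 2 ^ q)%N <=
  INR #|genset p (2 ^ q) n| / INR (gsize (Gs n) ^ p).
Proof.
set c := (2 ^ q)%N; set L := (n.+1 %/ c)%N; set rho := 1 - / 3 ^ p.
set m := n.+1; set K := KK n; set t := tt n; set k := kk n.
have [Htk HtK HkK] := params n.
have Hrho : 0 <= rho <= 1 := rho_bounds p.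
have Hlow := card_gen_lower n K k p c L.
have HKm : INR ((K ^ m) ^ p) = INR (K ^ p) ^ m by rewrite expnAC INR_exp.
have HS : INR (K ^ p) = 3 ^ p * INR (t ^ p).
  have H3 : INR 3 = 3 by rewrite /=; lra.
  by rewrite !INR_exp /K /KK INR_mul H3 Rpow_mult_distr.
have HSr : INR (K ^ p) - INR (t ^ p) = INR (K ^ p) * rho.
  rewrite HS /rho; have := three_pow p; move=> H3; field; lra.
have HSpos : 0 <= INR (K ^ p) by apply: pos_INR.
have Hbad : forall T (g : 'I_c), INR #|@bad n K k p L T g| <= INR ((K ^ m) ^ p) * rho ^ L.
  move=> T g.
  have H1 := card_bad n L T g HkK Htk HtK.
  have HGL : (L <= #|[set a : 'I_n.+1 | (a %/ L == g)%N]|)%N by apply: card_grp.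
  have HGm : (#|[set a : 'I_n.+1 | (a %/ L == g)%N]| <= m)%N.
    by rewrite -[X in (_ <= X)%N](card_ord m); apply: max_card.
  move: H1 HGL HGm; set G := #|[set a : 'I_n.+1 | (a %/ L == g)%N]| => H1 HGL HGm.
  apply: Rle_trans (INR_leq H1) _.
  have Htp : (t ^ p <= K ^ p)%N by apply: expn_mono; rewrite /K /KK -/t; lia.
  rewrite INR_mul [INR ((K ^ p - t ^ p) ^ G)]INR_exp [INR ((K ^ p) ^ (_ - G))]INR_exp INR_sub // HSr Rpow_mult_distr HKm.
  rewrite -[in X in _ <= X](subnKC HGm) -plusE pow_add. rewrite -/m.
  have HA : 0 <= INR (K ^ p) ^ G by apply: pow_le.
  have HB : 0 <= INR (K ^ p) ^ (m - G) by apply: pow_le.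
  have HC : rho ^ G <= rho ^ L by apply: pow_dec.
  have HD : 0 <= rho ^ G by apply: pow_le; lra.
  have := Rmult_le_compat_l _ _ _ (Rmult_le_pos _ _ HA HB) HC.
  lra.
have Hsum : INR (\sum_(T : {ffun 'I_p -> bool}) \sum_(g : 'I_c) #|@bad n K k p L T g|) <=
            INR (2 ^ p) * (INR c * (INR ((K ^ m) ^ p) * rho ^ L)).
  apply: Rle_trans (sum_bound (M := INR c * (INR ((K ^ m) ^ p) * rho ^ L)) _) _.
    move=> T; apply: Rle_trans (sum_bound (M := INR ((K ^ m) ^ p) * rho ^ L) _) _.
      exact: Hbad.
    by rewrite card_ord; lra.
  by rewrite card_ffun card_bool card_ord; lra.
have HA : INR ((K ^ m) ^ p) * (1 - INR (2 ^ p) * INR c * rho ^ L) <= INR #|genset p c n|.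
  have := INR_leq Hlow; rewrite INR_add -/m => H.
  have key : forall A B X a b r : R, X <= A + B -> B <= a * (b * (X * r)) -> X * (1 - a * b * r) <= A.
    by move=> A B X a b r; lra.
  exact: (key _ _ _ _ _ _ H Hsum).
set N := gsize (Gs n).
have HN : INR N = INR m + INR (K ^ m) by rewrite /N gsize_Gs INR_add.
have HKK : (3 * m * m <= K ^ m)%N.
  have HK : K = (3 * m * m)%N by rewrite /K /KK /tt mulnA.
  have HK0 : (0 < K)%N by rewrite HK /m; lia.
  apply: (@leq_trans K); first by rewrite HK.
  rewrite -{1}(expn1 K); exact: leq_pexp2l.
have Hm : 0 < INR m by apply: lt_0_INR; apply/ltP.
have H3 : INR 3 = 3 by rewrite /=; lra.
have HKmR : 3 * INR m * INR m <= INR (K ^ m) by have := INR_leq HKK; rewrite !INR_mul H3.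
have HNpos : 0 < INR N by rewrite HN; nra.
set x := INR m / INR N.
have Ex : x * INR N = INR m by rewrite /x; field; lra.
have Hx0 : 0 <= x.
  by apply: Rmult_le_pos; [lra | apply: Rlt_le; apply: Rinv_0_lt_compat].
have Hx3 : x * (3 * INR m) <= 1.
  have : x * (3 * INR m * INR m) <= x * INR N by apply: Rmult_le_compat_l => //; lra.
  rewrite Ex => H.
  have : x * (3 * INR m) * INR m <= 1 * INR m by lra.
  move=> H'; apply: (Rmult_le_reg_r (INR m)) => //.
have Hx1 : x <= 1 by nra.
have HX : INR (K ^ m) = (1 - x) * INR N by rewrite /x HN; field; rewrite -HN; lra.
have HNp : INR (N ^ p) = INR N ^ p by rewrite INR_exp.
have HKp : INR ((K ^ m) ^ p) = (1 - x) ^ p * INR N ^ p by rewrite INR_exp HX Rpow_mult_distr.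
rewrite HNp; apply: le_div; first by apply: pow_lt.
set y := INR (2 ^ p) * INR c * rho ^ L.
rewrite -/y in HA; rewrite HKp in HA.
have Hy0 : 0 <= y.
  apply: Rmult_le_pos; [apply: Rmult_le_pos; apply: pos_INR | apply: pow_le; lra].
have Hbern := bern p (conj Hx0 Hx1).
have HNp0 : 0 < INR N ^ p by apply: pow_lt.
have HA0 : 0 <= INR #|genset p c n| by apply: pos_INR.
have Hp0 : 0 <= INR p by apply: pos_INR.
have Hpx : INR p * x <= INR p / (3 * INR m).
  apply: le_div; first lra.
  have := Rmult_le_compat_l _ _ _ Hp0 Hx3; lra.
clearbody x y.
case: (Rle_lt_dec y 1) => Hy.
- have S1 : (1 - INR p / (3 * INR m) - y) * INR N ^ p <= (1 - INR p * x - y) * INR N ^ p.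
    apply: Rmult_le_compat_r; lra.
  have S2 : (1 - INR p * x - y) <= (1 - INR p * x) * (1 - y).
    have : 0 <= INR p * x * y by apply: Rmult_le_pos => //; apply: Rmult_le_pos.
    nra.
  have S3 : (1 - INR p * x) * (1 - y) <= (1 - x) ^ p * (1 - y).
    apply: Rmult_le_compat_r; lra.
  have S4 : (1 - INR p * x - y) * INR N ^ p <= (1 - x) ^ p * (1 - y) * INR N ^ p.
    apply: Rmult_le_compat_r; lra.
  have E : (1 - x) ^ p * (1 - y) * INR N ^ p = (1 - x) ^ p * INR N ^ p * (1 - y) by ring.
  apply: Rle_trans S1 _; apply: Rle_trans S4 _; rewrite E; exact: HA.
- have : 1 - INR p / (3 * INR m) - y < 0.
    have : 0 <= INR p / (3 * INR m).
      by apply: Rmult_le_pos => //; apply: Rlt_le; apply: Rinv_0_lt_compat; lra.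
    lra.
  move=> Hneg; apply: Rle_trans _ HA0; apply: Rlt_le; have := Rmult_lt_compat_r _ _ _ HNp0 Hneg; by rewrite Rmult_0_l.
Qed.

Close Scope R_scope.


Local Open Scope R_scope.

Lemma div_lt a b c : 0 < c -> b < a * c -> b / c < a.
Proof.
move=> Hc H; apply: (Rmult_lt_reg_r c) => //.
rewrite /Rdiv Rmult_assoc Rinv_l; lra.
Qed.

Lemma gsize_pos n : (0 < gsize (Gs n))%N.
Proof. by rewrite gsize_Gs. Qed.

Lemma ratio_le1 a d : (a <= d)%N -> (0 < d)%N -> INR a / INR d <= 1.
Proof.
move=> H Hd; apply: div_le; first by apply: lt_0_INR; apply/ltP.
rewrite Rmult_1_l; exact: INR_leq.
Qed.

Lemma ratio_ge0 a d : 0 <= INR a / INR d.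
Proof.
case: d => [|d]; first by rewrite /= /Rdiv Rinv_0 Rmult_0_r; lra.
apply: Rmult_le_pos; first exact: pos_INR.
apply: Rlt_le; apply: Rinv_0_lt_compat; apply: lt_0_INR; lia.
Qed.

Lemma ratio_mono a b d : (a <= b)%N -> INR a / INR d <= INR b / INR d.
Proof.
move=> H; case: d => [|d]; first by rewrite /= /Rdiv Rinv_0 !Rmult_0_r; lra.
apply: Rmult_le_compat_r; last exact: INR_leq.
apply: Rlt_le; apply: Rinv_0_lt_compat; apply: lt_0_INR; lia.
Qed.

Lemma ratio_sub a d : (a <= d)%N -> (0 < d)%N -> INR (d - a) / INR d = 1 - INR a / INR d.
Proof.
move=> H Hd; rewrite INR_sub //; field.
by apply: not_0_INR; lia.
Qed.

Lemma card_tuples p n : #|[set: {ffun 'I_p -> vert (Gs n)}]| = (gsize (Gs n) ^ p)%N.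
Proof. by rewrite cardsT card_ffun !card_ord. Qed.

Lemma gf_cv p q :
  Un_cv (fun n => INR #|genset p (2 ^ q) n| / INR (gsize (Gs n) ^ p)) 1.
Proof.
move=> eps Heps.
set rho := 1 - / 3 ^ p.
have Hrho : 0 <= rho <= 1 := rho_bounds p.
have Hrho1 : Rabs rho < 1.
  rewrite Rabs_right; last lra.
  have := three_pow p => H3.
  have : 0 < / 3 ^ p by apply: Rinv_0_lt_compat; lra.
  rewrite /rho; lra.
set C := INR (2 ^ p) * INR (2 ^ q).
have HC : 0 < C.
  by apply: Rmult_lt_0_compat; apply: lt_0_INR; apply/ltP; rewrite expn_gt0.
have Hy : 0 < eps / (2 * C) by apply: Rdiv_lt_0_compat; lra.
have [L0 HL0] := pow_lt_1_zero rho Hrho1 (eps / (2 * C)) Hy.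
have [N1 HN1] := INR_archimed eps (INR p) Heps.
exists (maxn N1 (2 ^ q * L0)) => n /leP Hn.
have Hn1 : (N1 <= n)%N by move: Hn; rewrite geq_max => /andP [].
have Hn2 : (2 ^ q * L0 <= n.+1)%N by move: Hn; rewrite geq_max => /andP [_ H]; lia.
have HL : (L0 <= n.+1 %/ 2 ^ q)%N.
  have := leq_div2r (2 ^ q) Hn2; rewrite mulKn //; by rewrite expn_gt0.
have Hlow : 1 - INR p / (3 * INR n.+1) - INR (2 ^ p) * INR (2 ^ q) * rho ^ (n.+1 %/ 2 ^ q)%N <=
    INR #|genset p (2 ^ q) n| / INR (gsize (Gs n) ^ p) := gf_lower n p q.
have Hup : INR #|genset p (2 ^ q) n| / INR (gsize (Gs n) ^ p) <= 1.
  apply: ratio_le1; last by rewrite expn_gt0 gsize_pos.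
  by rewrite -card_tuples; apply: subset_leq_card; apply: subsetT.
have Hpow : rho ^ (n.+1 %/ 2 ^ q)%N < eps / (2 * C).
  have := HL0 _ (leP HL); rewrite Rabs_right //.
  by apply: Rle_ge; apply: pow_le; lra.
have Hterm : INR (2 ^ p) * INR (2 ^ q) * rho ^ (n.+1 %/ 2 ^ q)%N < eps / 2.
  rewrite -/C.
  have : C * rho ^ (n.+1 %/ 2 ^ q)%N < C * (eps / (2 * C)) by apply: Rmult_lt_compat_l.
  have -> : C * (eps / (2 * C)) = eps / 2 by field; lra.
  by [].
have Hp : INR p / (3 * INR n.+1) < eps / 2.
  have HnR : INR N1 <= INR n.+1 by apply: INR_leq; lia.
  have Hn0 : 0 < INR n.+1 by apply: lt_0_INR; lia.
  apply: div_lt; first lra.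
  nra.
clearbody rho C.
rewrite /Rdist Rabs_left1; lra.
Qed.

Lemma squeeze1 (a b : nat -> R) N0 : Un_cv a 1 ->
  (forall n, (N0 <= n)%N -> a n <= b n <= 1) -> Un_cv b 1.
Proof.
move=> Ha Hb eps He; have [N HN] := Ha eps He; exists (maxn N N0) => n /leP Hn.
have := HN n (leP (leq_trans (leq_maxl _ _) Hn)).
have := Hb n (leq_trans (leq_maxr _ _) Hn).
rewrite /Rdist /Rabs => Hab; do 2 case: Rcase_abs => ?; lra.
Qed.

Lemma squeeze0 (a b : nat -> R) N0 : Un_cv a 1 ->
  (forall n, (N0 <= n)%N -> 0 <= b n <= 1 - a n) -> Un_cv b 0.
Proof.
move=> Ha Hb eps He; have [N HN] := Ha eps He; exists (maxn N N0) => n /leP Hn.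
have := HN n (leP (leq_trans (leq_maxl _ _) Hn)).
have := Hb n (leq_trans (leq_maxr _ _) Hn).
rewrite /Rdist /Rabs => Hab; do 2 case: Rcase_abs => ?; lra.
Qed.

Lemma Gs_conv : FO_convergent Gs.
Proof.
move=> f _.
set p := fbound f; set q := qd f.
have Hpar : forall n, (p + q <= n)%N -> ((p + qd f < kk n) && (p + qd f < KK n - kk n))%N.
  move=> n Hn; have [H1 H2 _] := params n.
  have : (n.+1 <= tt n)%N by rewrite /tt leq_pmulr.
  rewrite -/q; lia.
have HA : forall n n' (v : {ffun 'I_p -> vert (Gs n)}) (v' : {ffun 'I_p -> vert (Gs n')}),
    (p + q <= n)%N -> (p + q <= n')%N -> v \in genset p (2 ^ q) n -> v' \in genset p (2 ^ q) n' ->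
    sat None (tuple_env v) f = sat None (tuple_env v') f.
  move=> n n' v v' Hn Hn'; rewrite !inE => Hg Hg'.
  exact: claimA (Hpar n Hn) (Hpar n' Hn') Hg Hg'.
rewrite /stone.
case: (classic (exists n (v : {ffun 'I_p -> vert (Gs n)}),
   [/\ (p + q <= n)%N, v \in genset p (2 ^ q) n & sat None (tuple_env v) f])) =>
   [[n0 [v0 [Hn0 Hg0 Hs0]]]|Hno].
- exists 1; apply: (squeeze1 (N0 := (p + q)%N) (gf_cv p q)).
  move=> n Hn; split.
  + apply: ratio_mono; apply: subset_leq_card; apply/subsetP => v Hv; rewrite inE.
    by rewrite (HA n n0 v v0).
  + apply: ratio_le1; last by rewrite expn_gt0 gsize_pos.
    by rewrite -card_tuples; apply: subset_leq_card; apply: subsetT.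
- exists 0; apply: (squeeze0 (N0 := (p + q)%N) (gf_cv p q)).
  move=> n Hn; split; first exact: ratio_ge0.
  have Hle : (#|genset p (2 ^ q) n| <= gsize (Gs n) ^ p)%N.
    by rewrite -card_tuples; apply: subset_leq_card; apply: subsetT.
  rewrite -ratio_sub //; last by rewrite expn_gt0 gsize_pos.
  apply: ratio_mono.
  rewrite -card_tuples cardsT -(cardsC (genset p (2 ^ q) n)) addKn.
  apply: subset_leq_card; apply/subsetP => v; rewrite !inE => Hs.
  apply/negP => Hg; apply: Hno; exists n, v; split => //; rewrite inE; exact: Hg.
Qed.

Close Scope R_scope.


Definition xi : formula :=
  FEx (FEx (FAnd (FAnd (FAdj (TVar 2) (TVar 1)) (FAdj (TVar 2) (TVar 0)))
                 (FAnd (FNot (FEq (TVar 1) (TVar 0))) (FNot (FAdj (TVar 1) (TVar 0)))))).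

Lemma sat1_xi (G : fsgraph) (v : vert G) :
  sat1 xi v = [exists y, exists z, [&& gadj v y && gadj v z, y != z & ~~ gadj y z]].
Proof. by []. Qed.

Lemma xi_A n (v : vert (Gs n)) : sat1 xi v -> isA (ev v).
Proof.
rewrite sat1_xi => /existsP [y /existsP [z]].
rewrite !gadj_ev.
rewrite -(inj_eq (@ev_inj _ _ _)).
case: (ev v) => [a|b] //.
case: (ev y) => [ay|b1]; case: (ev z) => [az|b2] //=; rewrite ?andbF //.
by rewrite eq_ll => /and3P [_ ->].
Qed.

Lemma models_xi n : models (Gs n) (FEx xi).
Proof.
have [Htk HtK HkK] := params n.
have Htt : (n.+1 <= tt n)%N by rewrite /tt leq_pmulr.
have Ht : (2 <= kk n)%N.
  rewrite /kk; case E: (odd n); last by lia.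
  have : (0 < n)%N by case: n E Htt {Htk HtK HkK}.
  lia.
have H0 : (0 < KK n)%N by lia.
have H1 : (1 < KK n)%N by lia.
pose b1 : {ffun 'I_n.+1 -> 'I_(KK n)} := [ffun _ => Ordinal H0].
pose b2 : {ffun 'I_n.+1 -> 'I_(KK n)} := [ffun _ => Ordinal H1].
pose e := fun u : Vt n (KK n) => (@er n (KK n) (kk n) u : vert (Gs n)).
have E : models (Gs n) (FEx xi) = [exists v : vert (Gs n), sat1 xi v] by [].
rewrite E.
apply/existsP; exists (e (inl ord0)).
rewrite sat1_xi.
apply/existsP; exists (e (inr b1)); apply/existsP; exists (e (inr b2)).
rewrite !gadj_ev /e !erK /= !ffunE /= (inj_eq (can_inj (@erK _ _ _))) eq_rr.
apply/and3P; split.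
- by apply/andP; split; lia.
- apply/negP => /eqP E2; have := congr1 (fun b : {ffun 'I_n.+1 -> 'I_(KK n)} => val (b ord0)) E2.
  by rewrite /= !ffunE.
- by [].
Qed.

Definition phiR := FAdj TRoot (TVar 0).

Lemma sol_phiR (G : fsgraph) (r : vert G) (v : {ffun 'I_1 -> vert G}) :
  (v \in solutions (Some r) phiR) = gadj r (v ord0).
Proof.
rewrite inE /= /tuple_env insubT /=.
by congr (gadj r (v _)); apply: val_inj.
Qed.

Lemma card_Bset n K k (a : 'I_n.+1) : (k <= K)%N ->
  #|[set b : {ffun 'I_n.+1 -> 'I_K} | (b a < k)%N]| = (k * K ^ n)%N.
Proof.
move=> HkK.
pose F := fun a' : 'I_n.+1 => if a' == a then [pred v : 'I_K | (v < k)%N] else predT.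
have -> : #|[set b : {ffun 'I_n.+1 -> 'I_K} | (b a < k)%N]| =
          #|[set b : {ffun 'I_n.+1 -> 'I_K} | b \in family F]|.
  apply: eq_card => b; rewrite !inE; apply/idP/familyP => [H a'|H].
  - by rewrite /F; case: eqP => [->|].
  - by have := H a; rewrite /F eqxx.
rewrite cardsE card_family prodF.
rewrite (eq_bigr (fun a' => if a' == a then k else K)); last first.
  move=> a' _; rewrite /F; case: eqP => _; last by rewrite card_ord.
  rewrite -[RHS](card_lo HkK); apply: eq_card => v; by rewrite !inE.
rewrite prod_if card_ord.
have -> : #|[set a' : 'I_n.+1 | a' == a]| = 1%N.
  by rewrite -(cards1 a); apply: eq_card => a'; rewrite !inE.
by rewrite expn1 subn1.
Qed.

Lemma deg_bounds n (a : 'I_n.+1) :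
  ((kk n * KK n ^ n <= #|[set u : Vt n (KK n) | adjV (kk n) (inl a) u]|) &&
  (#|[set u : Vt n (KK n) | adjV (kk n) (inl a) u]| <= n.+1 + kk n * KK n ^ n))%N.
Proof.
have [_ _ HkK] := params n.
set B := [set b : {ffun 'I_n.+1 -> 'I_(KK n)} | (b a < kk n)%N].
have HB : #|B| = (kk n * KK n ^ n)%N by apply: card_Bset.
have injr : injective (@inr 'I_n.+1 {ffun 'I_n.+1 -> 'I_(KK n)}) by move=> x y [].
have injl : injective (@inl 'I_n.+1 {ffun 'I_n.+1 -> 'I_(KK n)}) by move=> x y [].
apply/andP; split.
- rewrite -HB -(card_imset _ injr); apply: subset_leq_card; apply/subsetP => u /imsetP [b Hb ->].
  by rewrite inE /=; rewrite inE in Hb.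
- apply: leq_trans (_ : #|(inl @: [set: 'I_n.+1]) :|: (inr @: B)| <= _)%N.
    apply: subset_leq_card; apply/subsetP => -[a'|b] Hu; apply/setUP.
      by left; apply/imsetP; exists a'.
    by right; apply/imsetP; exists b => //; rewrite inE; rewrite inE in Hu.
  apply: leq_trans (leq_card_setU _ _).1 _.
  by rewrite !card_imset // cardsT card_ord HB.
Qed.

Local Open Scope R_scope.

Lemma stone_phiR n (r : vert (Gs n)) :
  stone (Some r) phiR = INR #|[set u : Vt n (KK n) | adjV (kk n) (ev r) u]| / INR (gsize (Gs n)).
Proof.
rewrite /stone [fbound phiR]/= expn1; congr (INR _ / _).
pose f := fun u : Vt n (KK n) => [ffun _ : 'I_1 => (er u : vert (Gs n))].
have inj : injective f.
  move=> u1 u2 E; have := congr1 (fun v : {ffun 'I_1 -> vert (Gs n)} => ev (v ord0)) E.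
  by rewrite /f !ffunE !erK.
rewrite -(card_imset _ inj); apply: eq_card => v; rewrite sol_phiR; apply/idP/imsetP.
- move=> H; exists (ev (v ord0)); first by rewrite inE -gadj_ev.
  apply/ffunP => i; rewrite /f ffunE evK; congr (v _); apply: val_inj; by case: i => -[].
- by case=> u Hu ->; rewrite /f ffunE gadj_ev erK; rewrite inE in Hu.
Qed.

Lemma deg_setup n (r : vert (Gs n)) : sat1 xi r -> exists a : 'I_n.+1, ev r = inl a.
Proof. by move/xi_A; case: (ev r) => [a|b] //; exists a. Qed.

Lemma gsize_X n : gsize (Gs n) = (n.+1 + 3 * (tt n * KK n ^ n))%N.
Proof. by rewrite gsize_Gs expnS {1}/KK mulnA. Qed.

Lemma X_big n : (2 <= n)%N -> (3 * n.+1 <= tt n * KK n ^ n)%N.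
Proof.
move=> Hn.
have H1 : (1 <= KK n ^ n)%N by rewrite expn_gt0 /KK /tt; lia.
apply: leq_trans (_ : tt n * 1 <= _)%N; last by rewrite leq_mul2l H1 orbT.
by rewrite muln1 /tt leq_mul2r; apply/orP; right; lia.
Qed.

Lemma stone_odd n (r : vert (Gs n)) : odd n -> (2 <= n)%N -> sat1 xi r ->
  stone (Some r) phiR <= 2 / 5.
Proof.
move=> Ho Hn Hr; have [a Ha] := deg_setup Hr.
rewrite stone_phiR Ha.
have /andP [_ Hup] := deg_bounds a.
have HX := X_big Hn.
move: Hup; rewrite /kk Ho => Hup.
have Hnat : (5 * #|[set u : Vt n (KK n) | adjV (tt n) (inl a) u]| <= 2 * gsize (Gs n))%N.
  rewrite gsize_X; lia.
have := INR_leq Hnat; rewrite !INR_mul.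
have -> : INR 5 = 5 by rewrite /=; lra.
have -> : INR 2 = 2 by rewrite /=; lra.
move=> H; apply: div_le; first by apply: lt_0_INR; apply/ltP; apply: gsize_pos.
lra.
Qed.

Lemma stone_even n (r : vert (Gs n)) : ~~ odd n -> (2 <= n)%N -> sat1 xi r ->
  3 / 5 <= stone (Some r) phiR.
Proof.
move=> Ho Hn Hr; have [a Ha] := deg_setup Hr.
rewrite stone_phiR Ha.
have /andP [Hlo _] := deg_bounds a.
have HX := X_big Hn.
move: Hlo; rewrite /kk (negbTE Ho) => Hlo.
have Hnat : (3 * gsize (Gs n) <= 5 * #|[set u : Vt n (KK n) | adjV (2 * tt n) (inl a) u]|)%N.
  rewrite gsize_X; lia.
have := INR_leq Hnat; rewrite !INR_mul.
have -> : INR 5 = 5 by rewrite /=; lra.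
have -> : INR 3 = 3 by rewrite /=; lra.
move=> H; apply: le_div; first by apply: lt_0_INR; apply/ltP; apply: gsize_pos.
lra.
Qed.

Definition eps20 : R := 1 / 20.
Lemma eps20_pos : eps20 > 0.
Proof. rewrite /eps20; lra. Qed.

Close Scope R_scope.

Theorem proposition7 :
  exists (G : nat -> fsgraph) (xi : formula),
    [/\ no_root xi, fbound xi = 1%N, FO_convergent G,
        (forall n, @models (G n) (FEx xi)) &
        ~ (exists r : forall n, vert (G n),
             (forall n, @sat1 (G n) xi (r n)) /\ @FO_convergent_rooted G r)].
Proof.
exists Gs, xi; split => //.
- exact: Gs_conv.
- exact: models_xi.
case=> r [Hr Hc]; have [l Hl] := Hc phiR.
have [N HN] := Hl eps20 eps20_pos.
have H1 := HN ((N + 2).*2)%N ltac:(apply/leP; lia).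
have H2 := HN ((N + 2).*2).+1 ltac:(apply/leP; lia).
have E1 := @stone_even ((N + 2).*2)%N (r ((N + 2).*2)%N) ltac:(by rewrite odd_double) ltac:(lia) (Hr _).
have O2 := @stone_odd ((N + 2).*2).+1 (r ((N + 2).*2).+1) ltac:(by rewrite /= odd_double) ltac:(lia) (Hr _).
move: H1 H2 E1 O2; rewrite /Rdist /Rabs /eps20; do 2 case: Rcase_abs => ?; lra.
Qed.
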